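(* Let $p\ge2$ and $n,\ell,t$ be positive integers. Every $t$-tandem-duplication-correcting code $\mathcal{C}\subseteq\mathbb{Z}_p^n$ with respect to duplication length $\ell$ satisfies $$n-\log_p|\mathcal{C}|\ge t\log_p n-t\log_p\bigl(t(p-1)\bigr)-t(\ell+1).$$
   Context: $\mathbb{Z}_p=\{0,1,\dots,p-1\}$. For a word $\mathbf{x}$ over $\mathbb{Z}_p$ and $0\le i\le|\mathbf{x}|-\ell$, write $\mathbf{x}=\mathbf{u}\mathbf{v}\mathbf{w}$ with $|\mathbf{u}|=i$, $|\mathbf{v}|=\ell$; the tandem duplication of length $\ell$ at position $i$ produces $\mathbf{u}\mathbf{v}\mathbf{v}\mathbf{w}$. The ball $B_t^{\tau_\ell}(\mathbf{x})$ is the set of words obtainable from $\mathbf{x}$ by at most $t$ successive tandem duplications of length $\ell$. A code $\mathcal{C}\subseteq\mathbb{Z}_p^n$ is $t$-tandem-duplication-correcting (duplication length $\ell$) if $B_t^{\tau_\ell}(\mathbf{c})\cap B_t^{\tau_\ell}(\mathbf{c}')=\emptyset$ for all distinct $\mathbf{c},\mathbf{c}'\in\mathcal{C}$. *)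

(* Defs.v *)
From mathcomp Require Import all_boot.
From Stdlib Require Import Reals.
Set Implicit Arguments. Unset Strict Implicit. Unset Printing Implicit Defensive.

(* tandem duplication of length l at position i: x = u v w, |u| = i, |v| = l,
   result u v v w; defined only when i + l <= |x|. *)
Definition tdup (T : Type) (l i : nat) (x : seq T) : seq T :=
  take (i + l) x ++ drop i x.

Definition tdup_step (T : Type) (l : nat) (x y : seq T) : Prop :=
  exists i, i + l <= size x /\ y = tdup l i x.

Fixpoint tdup_k (T : Type) (l k : nat) (x y : seq T) : Prop :=
  match k with
  | 0 => y = x
  | k'.+1 => exists z, tdup_k l k' x z /\ tdup_step l z y
  end.

Definition tdup_ball (T : Type) (l t : nat) (x : seq T) : seq T -> Prop :=
  fun y => exists k, k <= t /\ tdup_k l k x y.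

Definition tdup_correcting (p n l t : nat) (C : {set n.-tuple 'I_p}) : Prop :=
  forall c c' : n.-tuple 'I_p, c \in C -> c' \in C -> c != c' ->
    forall y : seq 'I_p, ~ (tdup_ball l t (tval c) y /\ tdup_ball l t (tval c') y).

Definition logp (p : nat) (x : R) : R := (ln x / ln (INR p))%R.

(* Main.v *)
Require Import Defs.
From mathcomp Require Import all_boot.
From mathcomp Require Import zify.
From Stdlib Require Import Reals Lra.
From mathcomp Require Import ssrnat.
Set Implicit Arguments. Unset Strict Implicit. Unset Printing Implicit Defensive.
Local Notation id := Datatypes.id (only parsing).

Section Words.
Variables (T : eqType) (d : T) (l : nat).

Definition Dv (x : seq T) : seq bool :=
  mkseq (fun j => nth d x j != nth d x (j + l)) (size x - l).
Definition wt x := count id (Dv x).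

Lemma size_Dv (x : seq T) : size (Dv x) = size x - l.
Proof. by rewrite size_mkseq. Qed.

Lemma nth_Dv (x : seq T) j : nth false (Dv x) j = (j + l < size x) && (nth d x j != nth d x (j + l)).
Proof.
rewrite /Dv; case: (ltnP j (size x - l)) => h.
  by rewrite nth_mkseq // (_ : j + l < size x = true) //; lia.
by rewrite nth_default ?size_mkseq // (_ : j + l < size x = false) //; lia.
Qed.

Lemma size_tdup i (x : seq T) : i + l <= size x -> size (tdup l i x) = size x + l.
Proof. move=> h; rewrite /tdup size_cat size_take size_drop; case: ifP; lia. Qed.

Lemma nth_tdup i (x : seq T) k : i + l <= size x ->
  nth d (tdup l i x) k = if k < i + l then nth d x k else nth d x (k - l).
Proof.
move=> h; rewrite /tdup nth_cat size_take.
have -> : (if i + l < size x then i + l else size x) = i + l by case: ifP; lia.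
case: ifP => hk; first by rewrite nth_take.
rewrite nth_drop; congr nth; lia.
Qed.

Lemma Dv_tdup i (x : seq T) : i + l <= size x ->
  Dv (tdup l i x) = take i (Dv x) ++ nseq l false ++ drop i (Dv x).
Proof.
move=> h; apply: (@eq_from_nth _ false).
  rewrite size_Dv size_tdup // !size_cat size_take size_nseq size_drop size_Dv.
  case: ifP; lia.
move=> j; rewrite size_Dv size_tdup // => hj.
rewrite nth_Dv size_tdup // !nth_tdup // nth_cat size_take size_Dv.
have -> : (if i < size x - l then i else size x - l) = i by case: ifP; lia.
case: (ltnP j i) => h1.
  rewrite nth_take // nth_Dv.
  have -> : j < i + l = true by lia.
  have -> : j + l < i + l = true by lia.
  have -> : j + l < size x = true by lia.
  by have -> : j + l < size x + l = true by lia.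
rewrite nth_cat size_nseq.
case: (ltnP (j - i) l) => h2.
  rewrite nth_nseq h2.
  have -> : j < i + l = true by lia.
  have -> : j + l < i + l = false by lia.
  have -> : j + l - l = j by lia.
  by rewrite eqxx andbF.
rewrite nth_drop nth_Dv.
have -> : j < i + l = false by lia.
have -> : j + l < i + l = false by lia.
have -> : i + (j - i - l) = j - l by lia.
have -> : j + l - l = j by lia.
have -> : j - l + l = j by lia.
congr andb; lia.
Qed.

Lemma wt_tdup i (x : seq T) : i + l <= size x -> wt (tdup l i x) = wt x.
Proof.
move=> h; rewrite /wt Dv_tdup // !count_cat count_nseq /= mul0n add0n.
by rewrite -count_cat cat_take_drop.
Qed.

Lemma drop_Dv k (x : seq T) : Dv (drop k x) = drop k (Dv x).
Proof.
apply: (@eq_from_nth _ false); first by rewrite size_drop !size_Dv size_drop; lia.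
move=> j _; rewrite nth_drop !nth_Dv size_drop !nth_drop.
congr andb; [lia | by rewrite addnA].
Qed.


Lemma tdupk_trans a b (x z y : seq T) :
  tdup_k l a x z -> tdup_k l b z y -> tdup_k l (a + b) x y.
Proof.
move=> h1; elim: b y => [|b IH] y /=; first by move=> ->; rewrite addn0.
by case=> z' [h2 h3]; rewrite addnS /=; exists z'; split => //; apply: IH.
Qed.

Lemma tdupk_cons k (x z y : seq T) :
  tdup_step l x z -> tdup_k l k z y -> tdup_k l k.+1 x y.
Proof.
move=> h1 h2; have := @tdupk_trans 1 k x z y; rewrite add1n; apply => //.
by exists x.
Qed.

Lemma tdupk_inv k (x y : seq T) : tdup_k l k x y ->
  size y = size x + k * l /\ wt y = wt x.
Proof.
elim: k y => [|k IH] y /=; first by move=> ->; rewrite addn0.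
case=> z [/IH [h1 h2] [i [hi ->]]]; rewrite size_tdup // wt_tdup //.
by rewrite h1 h2 mulSn; split => //; lia.
Qed.

Lemma tdupk_prefix k (a b y : seq T) : tdup_k l k b y -> tdup_k l k (a ++ b) (a ++ y).
Proof.
elim: k y => [|k IH] y /=; first by move=> ->.
case=> z [/IH h1 [i [hi ->]]]; exists (a ++ z); split => //.
exists (size a + i); split; first by rewrite size_cat; lia.
rewrite /tdup take_cat drop_cat.
have -> : size a + i + l < size a = false by lia.
have -> : size a + i < size a = false by lia.
by rewrite -addnA !addKn catA.
Qed.

Lemma tdupk_take k (b y : seq T) : tdup_k l k b y -> take l y = take l b.
Proof.
elim: k y => [|k IH] y /=; first by move=> ->.
case=> z [/IH h1 [i [hi ->]]]; rewrite /tdup takel_cat; last by rewrite size_take; case: ifP; lia.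
by rewrite take_takel ?h1 //; lia.
Qed.

Definition Zp m (y : seq T) := forall j, j < m -> nth false (Dv y) j = false.

Lemma tdupk_Zp k m (x y : seq T) : tdup_k l k x y -> Zp m x -> Zp m y.
Proof.
elim: k y => [|k IH] y /=; first by move=> ->.
case=> z [/IH h1 [i [hi ->]]] /h1 hz j hj.
rewrite Dv_tdup // nth_cat size_take size_Dv.
have -> : (if i < size z - l then i else size z - l) = i by case: ifP; lia.
case: ifP => h2; first by rewrite nth_take // hz.
rewrite nth_cat size_nseq; case: ifP => h3; first by rewrite nth_nseq h3.
rewrite nth_drop hz //; lia.
Qed.

Lemma count_take_find (s : seq bool) : has id s -> count id (take (find id s).+1 s) = 1.
Proof. elim: s => [|b s IH] //; case: b => /= h; [by rewrite take0 | by rewrite add0n IH]. Qed.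

Fixpoint desc (w : nat) : nat -> seq T -> seq (seq T) :=
  match w with
  | 0 => fun t x => [:: iter t (tdup l 0) x]
  | w'.+1 => fix dt t x := match t with
      | 0 => [:: x]
      | t'.+1 => [seq take (find id (Dv x)).+1 x ++ y | y <- desc w' t (drop (find id (Dv x)).+1 x)]
                 ++ dt t' (tdup l 0 x)
      end
  end.

Lemma size_desc w t (x : seq T) : size (desc w t x) = 'C(w + t, t).
Proof.
elim: w t x => [|w IHw] t x; first by rewrite /= add0n binn.
elim: t x => [|t IHt] x /=; first by rewrite bin0.
rewrite size_cat size_map IHw IHt.
by rewrite !addSn !addnS binS.
Qed.

Lemma desc_fact (w : nat) (x : seq T) : 0 < l -> wt x = w.+1 ->
  let pi := find id (Dv x) in
  [/\ nth false (Dv x) pi, pi + l < size x, wt (drop pi.+1 x) = w &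
      forall j, j < pi -> nth false (Dv x) j = false].
Proof.
move=> l0 hw pi.
have hh : has id (Dv x) by rewrite has_count /wt in hw *; rewrite hw.
have h1 : nth false (Dv x) pi by apply: (nth_find false hh).
split => //.
- by move: h1; rewrite nth_Dv => /andP [].
- move: hw; rewrite /wt -(cat_take_drop pi.+1 (Dv x)) count_cat count_take_find //.
  by rewrite -drop_Dv add1n => -[].
- by move=> j hj; apply: (before_find false hj).
Qed.

Lemma desc_reach w t (x : seq T) : 0 < l -> wt x = w -> l <= size x ->
  forall y, y \in desc w t x -> tdup_k l t x y.
Proof.
move=> l0; elim: w t x => [|w IHw] t x hw hs y.
  rewrite /= inE => /eqP ->; elim: t => [|t IH] //=.
  exists (iter t (tdup l 0) x); split => //; exists 0; split => //.
  by have [-> _] := tdupk_inv IH; lia.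
elim: t x hw hs y => [|t IHt] x hw hs y; first by rewrite /= inE => /eqP ->.
have [h1 h2 h3 h4] := desc_fact l0 hw.
rewrite /= mem_cat => /orP [].
  case/mapP => y' hy' ->.
  have := IHw t.+1 _ h3 _ _ hy'; rewrite size_drop => /(_ ltac:(lia)) hk.
  by have := tdupk_prefix (take (find id (Dv x)).+1 x) hk; rewrite cat_take_drop.
move=> hy; apply: (@tdupk_cons _ _ (tdup l 0 x)).
  by exists 0; split.
apply: IHt hy; first by rewrite wt_tdup.
by rewrite size_tdup //; lia.
Qed.

Lemma desc_uniq w t (x : seq T) : 0 < l -> wt x = w -> l <= size x ->
  uniq (desc w t x).
Proof.
move=> l0; elim: w t x => [|w IHw] t x hw hs //.
elim: t x hw hs => [|t IHt] x hw hs //.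
have [h1 h2 h3 h4] := desc_fact l0 hw.
set pi := find id (Dv x) in h1 h2 h3 h4 *.
rewrite /= cat_uniq; apply/and3P; split.
- rewrite map_inj_uniq; first by apply: IHw => //; rewrite size_drop; lia.
  by move=> u v /(congr1 (drop (size (take pi.+1 x)))); rewrite !drop_size_cat.
- apply/hasPn => y2 hy2; apply/negP => /mapP [y' hy' ey].
  have hk : tdup_k l t (tdup l 0 x) y2.
    have hy2' : y2 \in desc w.+1 t (tdup l 0 x) by [].
    apply: (desc_reach l0 _ _ hy2'); first by rewrite wt_tdup.
    by rewrite size_tdup //; lia.
  have hz : Zp pi.+1 y2.
    apply: (tdupk_Zp (m:=pi.+1) hk) => j hj; rewrite Dv_tdup // nth_cat size_take size_Dv.
    have -> : (if 0 < size x - l then 0 else size x - l) = 0 by case: ifP; lia.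
    rewrite nth_cat size_nseq; case: ifP => h5; first by rewrite nth_nseq h5.
    by rewrite nth_drop h4 //; lia.
  have hk' : tdup_k l t.+1 (drop pi.+1 x) y'.
    by apply: (desc_reach l0 h3 _ hy'); rewrite size_drop; lia.
  have [hs' _] := tdupk_inv hk'.
  have ht := tdupk_take hk'.
  move: (hz pi (ltnSn _)); rewrite ey nth_Dv.
  have sa : size (take pi.+1 x) = pi.+1 by rewrite size_takel //; lia.
  rewrite size_cat sa hs' size_drop.
  have -> : pi + l < pi.+1 + (size x - pi.+1 + t.+1 * l) = true by lia.
  rewrite /= !nth_cat sa ltnSn nth_take //.
  have -> : pi + l < pi.+1 = false by lia.
  have -> : pi + l - pi.+1 = l.-1 by lia.
  have -> : nth d y' l.-1 = nth d x (pi + l).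
    have hl : l.-1 < l by lia.
    rewrite -(nth_take d hl y') ht (nth_take d hl) nth_drop.
    by congr nth; lia.
  by move: h1; rewrite nth_Dv => /andP [_ /negbTE ->].
- change (uniq (desc w.+1 t (tdup l 0 x))).
  by apply: IHt => //; [rewrite wt_tdup | rewrite size_tdup //; lia].
Qed.

End Words.

Section Count.
Variables (T : eqType) (d : T) (l : nat) (E : seq T).
Hypothesis uE : uniq E.
Hypothesis allE : forall a, a \in E.
Hypothesis l0 : 0 < l.

Fixpoint words m : seq (seq T) :=
  if m is m'.+1 then [seq rcons x a | x <- words m', a <- E] else [:: [::]].

Lemma mem_words m x : (x \in words m) = (size x == m).
Proof.
elim: m x => [|m IH] x /=; first by rewrite inE; case: x.
apply/idP/idP.
  by case/allpairsP => -[x' a] /= [h1 _ ->]; rewrite size_rcons eqSS -IH.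
case/lastP: x => [|x' a] //; rewrite size_rcons eqSS => h.
by apply/allpairsP; exists (x', a); split => //; rewrite IH.
Qed.

Lemma uniq_words m : uniq (words m).
Proof.
elim: m => [|m IH] //=; apply: allpairs_uniq => // -[x1 a1] [x2 a2] _ _ /=.
exact: rcons_inj.
Qed.

Lemma size_words m : size (words m) = size E ^ m.
Proof. by elim: m => [|m IH] //=; rewrite size_allpairs IH expnS mulnC. Qed.

Lemma Dv_rcons (x : seq T) a : l <= size x ->
  Dv d l (rcons x a) = rcons (Dv d l x) (nth d x (size x - l) != a).
Proof.
move=> h; apply: (@eq_from_nth _ false).
  by rewrite size_rcons !size_Dv size_rcons; lia.
move=> j; rewrite size_Dv size_rcons => hj.
rewrite nth_Dv size_rcons !nth_rcons size_Dv.
case: (ltnP j (size x - l)) => h1.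
  rewrite nth_Dv.
  have -> : j < size x = true by lia.
  have -> : j + l < size x = true by lia.
  by have -> : j + l < (size x).+1 = true by lia.
have ej : j = size x - l by lia.
rewrite ej eqxx.
have -> : size x - l + l < (size x).+1 = true by lia.
have -> : size x - l < size x = true by lia.
have -> : size x - l + l < size x = false by lia.
have -> : size x - l + l = size x by lia.
by rewrite eqxx.
Qed.

Lemma count_E (c : T) v w :
  count (fun a => v + (c != a) == w) E = (v == w) + (size E).-1 * (v.+1 == w).
Proof.
rewrite ((permP (perm_to_rem (allE c))) (fun a => v + (c != a) == w)) /= eqxx addn0.
have -> : (size E).-1 = size (rem c E) by rewrite size_rem.
congr addn.
rewrite (@eq_in_count _ _ (fun _ => v.+1 == w)); last first.
  move=> a; rewrite mem_rem_uniq // inE => /andP [h _].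
  by rewrite eq_sym in h; rewrite h addn1.
by case: (v.+1 == w); [rewrite count_predT muln1 | rewrite count_pred0 muln0].
Qed.

Definition cw m w := count (fun y => wt d l y == w) (words m).

Lemma cw_step m w : l <= m ->
  cw m.+1 w = cw m w + (size E).-1 * count (fun y => (wt d l y).+1 == w) (words m).
Proof.
move=> hm; rewrite /cw /=.
have : forall x, x \in words m -> l <= size x by move=> x; rewrite mem_words => /eqP ->.
elim: (words m) => [|x s IH] hs /=; first by rewrite muln0.
rewrite count_cat IH; last by move=> y hy; apply: hs; rewrite inE hy orbT.
rewrite count_map.
rewrite (@eq_count _ _ (fun a => wt d l x + (nth d x (size x - l) != a) == w)); last first.
  by move=> a /=; rewrite /wt Dv_rcons ?hs ?inE ?eqxx // -cats1 count_cat /= addn0.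
rewrite count_E mulnDr; lia.
Qed.

Lemma cw_closed k w : cw (l + k) w = size E ^ l * 'C(k, w) * (size E).-1 ^ w.
Proof.
elim: k w => [|k IH] w.
  rewrite addn0 /cw (@eq_in_count _ _ (fun _ => w == 0)); last first.
    move=> y; rewrite mem_words => /eqP hy.
    by rewrite /wt /Dv hy subnn /= eq_sym.
  case: w => [|w]; first by rewrite count_predT size_words bin0 muln1 expn0 muln1.
  by rewrite count_pred0 bin0n muln0 mul0n.
rewrite addnS cw_step; last by lia.
case: w => [|w].
  rewrite IH (@eq_count _ _ pred0) ?count_pred0 //.
  by rewrite !bin0 muln0 addn0.
rewrite IH (@eq_count _ _ (fun y => wt d l y == w)) // -/(cw _ _) IH binS.
rewrite expnS; lia.
Qed.

End Count.

Lemma uniq_flatten_map (S R : eqType) (f : S -> seq R) (s : seq S) :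
  uniq s -> (forall x, x \in s -> uniq (f x)) ->
  (forall x y z, x \in s -> y \in s -> x != y -> z \in f x -> z \in f y -> False) ->
  uniq (flatten (map f s)).
Proof.
elim: s => [|x s IH] //= /andP [hx hs] hu hd.
rewrite cat_uniq hu ?inE ?eqxx //= IH //; last first.
- by move=> a b z ha hb; apply: hd; rewrite inE ?ha ?hb orbT.
- by move=> a ha; apply: hu; rewrite inE ha orbT.
rewrite andbT; apply/hasPn => z /flattenP [u /mapP [y hy ->] hz]; apply/negP => hz'.
apply: (hd x y z) => //; rewrite ?inE ?eqxx ?hy ?orbT //.
by apply/negP => /eqP exy; rewrite exy hy in hx.
Qed.

Lemma size_sum_count (S : eqType) (g : S -> nat) K (s : seq S) :
  (forall x, x \in s -> g x < K) -> size s = \sum_(w < K) count (fun x => g x == w) s.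
Proof.
elim: s => [|x s IH] h /=; first by rewrite big1.
rewrite big_split /= -IH; last by move=> y hy; apply: h; rewrite inE hy orbT.
have hx : g x < K by apply: h; rewrite inE eqxx.
rewrite (bigD1 (Ordinal hx)) //= eqxx big1 ?add1n //.
move=> i hi; case: eqP => // e; move/eqP: hi; case; by apply: val_inj; rewrite /= e.
Qed.

Lemma binid N w t : 'C(N, w) * 'C(N + t, t) = 'C(N + t, w + t) * 'C(w + t, t).
Proof.
case: (leqP w N) => hw.
2:{ rewrite (bin_small hw) (@bin_small (N + t) (w + t)) ?mul0n //; lia. }
have f1 := bin_fact hw.
have f2 : 'C(N + t, t) * (t`! * N`!) = (N + t)`!.
  by rewrite -(bin_fact (leq_addl N t)) addnK.
have f3 : 'C(N + t, w + t) * ((w + t)`! * (N - w)`!) = (N + t)`!.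
  by rewrite -(bin_fact (_ : w + t <= N + t)) ?leq_add2r // subnDr.
have f4 : 'C(w + t, t) * (t`! * w`!) = (w + t)`!.
  by rewrite -(bin_fact (leq_addl w t)) addnK.
apply/eqP; rewrite -(eqn_pmul2r (_ : 0 < t`! * w`! * (N - w)`!)); last first.
  by rewrite !muln_gt0 !fact_gt0.
apply/eqP.
transitivity ((N + t)`!).
  by rewrite -f2 -f1; lia.
by rewrite -f3 -f4; lia.
Qed.

Lemma size_flatten_const (S R : eqType) (f : S -> seq R) (s : seq S) k :
  (forall x, x \in s -> size (f x) = k) -> size (flatten (map f s)) = size s * k.
Proof.
elim: s => [|x s IH] h //=.
rewrite size_cat h ?inE ?eqxx // IH ?mulSn // => y hy; by apply: h; rewrite inE hy orbT.
Qed.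

Lemma sum_shift (F : nat -> nat) N t :
  \sum_(w < N.+1) F (w + t) <= \sum_(k < (N + t).+1) F k.
Proof.
rewrite -(@big_mkord _ 0 addn N.+1 xpredT (fun w => F (w + t))) -(@big_mkord _ 0 addn (N+t).+1 xpredT F).
have -> : \sum_(0 <= w < N.+1) F (w + t) = \sum_(0 + t <= k < N.+1 + t) F k.
  by rewrite big_addn addnK.
rewrite (@big_cat_nat _ _ _ t 0 (N + t).+1) //=; last by lia.
by rewrite add0n addSn leq_addl.
Qed.

Section Main.
Variables (T : eqType) (d : T) (l : nat) (E : seq T).
Hypothesis uE : uniq E.
Hypothesis allE : forall a, a \in E.
Hypothesis l0 : 0 < l.

Lemma main_count (n t : nat) (cs : seq (seq T)) :
  l <= n -> uniq cs -> (forall c, c \in cs -> size c = n) ->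
  (forall c c', c \in cs -> c' \in cs -> c != c' ->
     forall y, tdup_k l t c y -> tdup_k l t c' y -> False) ->
  size cs * 'C(n + t * l - l + t, t) * (size E).-1 ^ t <= size E ^ l * size E ^ (n + t * l - l + t).
Proof.
move=> ln ucs scs dis.
set N := n + t * l - l.
set P := size E; set q := P.-1.
have hP : P = 1 + q by rewrite /q /P; have := allE d; case: (E) => //= _ _ _; lia.
have perw : forall w, count (fun c => wt d l c == w) cs * 'C(w + t, t) <= P ^ l * 'C(N, w) * q ^ w.
  move=> w.
  set sw := filter (fun c => wt d l c == w) cs.
  have hsw : forall c, c \in sw -> wt d l c = w /\ size c = n.
    by move=> c; rewrite mem_filter => /andP [/eqP h1 h2]; split => //; apply: scs.
  have e1 : size (flatten (map (desc d l w t) sw)) = count (fun c => wt d l c == w) cs * 'C(w + t, t).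
    rewrite (@size_flatten_const _ _ _ _ 'C(w + t, t)) ?size_filter // => c _.
    by rewrite size_desc.
  rewrite -e1 /P -(cw_closed d uE allE l0) -/N.
  have -> : l + N = n + t * l by rewrite /N addnC subnK // (leq_trans ln (leq_addr _ _)).
  rewrite /cw -size_filter; apply: uniq_leq_size.

    apply: uniq_flatten_map; first by rewrite filter_uniq.
      by move=> c /hsw [h1 h2]; apply: desc_uniq => //; rewrite h2.
    move=> c c' z /[dup] hc /hsw [h1 h2] /[dup] hc' /hsw [h1' h2'] hne hz hz'.
    apply: (dis c c') => //.
    - by move: hc; rewrite mem_filter => /andP [].
    - by move: hc'; rewrite mem_filter => /andP [].
    - by apply: (desc_reach l0 h1 _ hz); rewrite h2.
    - by apply: (desc_reach l0 h1' _ hz'); rewrite h2'.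
  move=> z /flattenP [u /mapP [c /hsw [h1 h2] ->] hz].
  have hk : tdup_k l t c z by apply: (desc_reach l0 h1 _ hz); rewrite h2.
  have [hs hw] := tdupk_inv d hk.
  by rewrite mem_filter mem_words // hs hw h1 h2 mulnC !eqxx.

have hK : forall c, c \in cs -> wt d l c < N.+1.
  move=> c hc; have := count_size id (Dv d l c); rewrite size_Dv scs // /wt /N => h.
  by rewrite ltnS (leq_trans h) // leq_sub2r // leq_addr.
rewrite (size_sum_count hK) !big_distrl /=.
have hb : forall w : 'I_N.+1,
    count (fun c => wt d l c == w) cs * 'C(N + t, t) * q ^ t <= P ^ l * ('C(N + t, w + t) * q ^ (w + t)).
  move=> w.
  rewrite -(@leq_pmul2r 'C(w + t, t)); last by rewrite bin_gt0 leq_addl.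
  have := leq_mul (perw w) (leqnn ('C(N + t, t) * q ^ t)).
  have -> : count (fun c => wt d l c == w) cs * 'C(N + t, t) * q ^ t * 'C(w + t, t)
    = count (fun c => wt d l c == w) cs * 'C(w + t, t) * ('C(N + t, t) * q ^ t) by lia.
  move/leq_trans; apply.
  rewrite expnD.
  have := binid N w t.
  move=> hbi.
  have -> : P ^ l * 'C(N, w) * q ^ w * ('C(N + t, t) * q ^ t) = P ^ l * ('C(N, w) * 'C(N + t, t)) * (q ^ w * q ^ t) by lia.
  by rewrite hbi; apply: eq_leq; lia.
apply: (@leq_trans (\sum_(w < N.+1) P ^ l * ('C(N + t, w + t) * q ^ (w + t)))).
  by apply: leq_sum => w _; exact: hb.
rewrite -big_distrr /=; apply: leq_mul => //.
apply: (leq_trans (sum_shift (fun k => 'C(N + t, k) * q ^ k) N t)).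
rewrite hP expnDn; apply: eq_leq; apply: eq_bigr => i _.
by rewrite exp1n mul1n.
Qed.

End Main.

Lemma pow_le_bin n t : n ^ t <= t ^ t * 'C(n + t, t).
Proof.
elim: t => [|t IH]; first by rewrite bin0.
have e : t.+1 * 'C(n + t.+1, t.+1) = (n + t).+1 * 'C(n + t, t).
  by rewrite -mul_bin_diag addnS.
rewrite expnS [t.+1 ^ t.+1]expnS [t.+1 * _]mulnC -mulnA e.
have h1 : t ^ t <= t.+1 ^ t by case: (posnP t) => [->|ht] //; rewrite leq_exp2r.
apply: (leq_trans (leq_mul (leqnn n) IH)).
rewrite mulnCA; apply: leq_mul => //.
apply: leq_mul => //; lia.
Qed.

Lemma final_nat p n l t A : 2 <= p -> 0 < t -> l <= n ->
  A * 'C(n + t * l - l + t, t) * (p - 1) ^ t <= p ^ l * p ^ (n + t * l - l + t) ->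
  A * n ^ t <= p ^ (n + t * (l + 1)) * (t * (p - 1)) ^ t.
Proof.
move=> hp ht ln h.
set N := n + t * l - l in h.
have hN : n <= N.
  rewrite /N -(prednK ht) mulSn addnCA addKn; exact: leq_addr.
have hM : l + (N + t) = n + t * (l + 1).
  rewrite addnA /N subnKC ?mulnDr ?muln1 ?addnA //; exact: leq_trans ln (leq_addr _ _).
have h1 : n ^ t <= t ^ t * 'C(N + t, t).
  apply: (leq_trans (pow_le_bin n t)); apply: leq_mul => //; apply: leq_bin2l; by rewrite leq_add2r.
have hq : 1 <= (p - 1) ^ t by rewrite expn_gt0 subn_gt0 hp.
have h2 : A * n ^ t * (p - 1) ^ t <= t ^ t * (p ^ l * p ^ (N + t)).
  apply: (@leq_trans (A * (t ^ t * 'C(N + t, t)) * (p - 1) ^ t)).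
    by rewrite leq_mul // leq_mul.
  have -> : A * (t ^ t * 'C(N + t, t)) * (p - 1) ^ t = t ^ t * (A * 'C(N + t, t) * (p - 1) ^ t) by lia.
  by rewrite leq_mul.
rewrite -expnD hM in h2.
apply: (@leq_trans (A * n ^ t * (p - 1) ^ t * (p - 1) ^ t)).
  by rewrite -mulnA -[X in X <= _]muln1 leq_mul // muln_gt0 hq.
rewrite expnMn mulnA; apply: leq_mul => //.
by rewrite [_ * t ^ t]mulnC.
Qed.

Lemma muln_INR a b : INR (a * b)%N = (INR a * INR b)%R.
Proof. exact: mult_INR. Qed.

Lemma INR_expn m k : INR (m ^ k)%N = (INR m ^ k)%R.
Proof. by elim: k => [|k IH] //; rewrite expnS -multE mult_INR IH. Qed.

Lemma real_part (p n l t A : nat) : 2 <= p -> 0 < n -> 0 < t -> 0 < A ->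
  A * n ^ t <= p ^ (n + t * (l + 1)) * (t * (p - 1)) ^ t ->
  (INR n - logp p (INR A) >=
   INR t * logp p (INR n) - INR t * logp p (INR (t * (p - 1)))
   - INR t * INR (l + 1))%R.
Proof.
move=> hp hn ht hA h.
have hK : 0 < t * (p - 1) by rewrite muln_gt0 ht subn_gt0.
have pos : forall m, 0 < m -> (0 < INR m)%R by move=> m /ltP; apply: lt_0_INR.
have hlp : (0 < ln (INR p))%R.
  rewrite -ln_1; apply: ln_increasing; first lra.
  by apply: lt_1_INR; apply/ltP.
set K := t * (p - 1) in h hK *; set M := n + t * (l + 1) in h.
have hle := le_INR _ _ (leP h).
rewrite !muln_INR !INR_expn in hle.
have hl : (ln (INR A) + INR t * ln (INR n) <=
           INR M * ln (INR p) + INR t * ln (INR K))%R.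
  rewrite -ln_pow; last (apply: pos; lia).
  rewrite -ln_pow; last (apply: pos; lia).
  rewrite -ln_pow; last (apply: pos; lia).
  rewrite -ln_mult; [|(apply: pos; lia)|apply: pow_lt; (apply: pos; lia)].
  rewrite -ln_mult; [|apply: pow_lt; (apply: pos; lia)|apply: pow_lt; exact: (pos _ hK)].
  case: (Rle_lt_or_eq_dec _ _ hle) => [hlt|->]; last lra.
  apply: Rlt_le; apply: ln_increasing => //.
  by apply: Rmult_lt_0_compat; [apply: pos | apply: pow_lt; apply: pos; lia].
rewrite /M -plusE plus_INR muln_INR in hl.
rewrite /logp.
set a := ln (INR A) in hl *; set b := ln (INR n) in hl *.
set k := ln (INR K) in hl *; set L := ln (INR p) in hl hlp *.
set m := INR (l + 1) in hl *.
have hL : L <> 0%R by lra.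
apply: Rle_ge.
have e : (INR n - a / L - (INR t * (b / L) - INR t * (k / L) - INR t * m))%R
  = ((INR n * L + INR t * m * L + INR t * k - a - INR t * b) * / L)%R.
  by field.
have key : (0 <= (INR n * L + INR t * m * L + INR t * k - a - INR t * b) * / L)%R.
  apply: Rmult_le_pos; first lra.
  by apply: Rlt_le; apply: Rinv_0_lt_compat.
lra.
Qed.

Theorem lemma2 (p n l t : nat) (C : {set n.-tuple 'I_p}) :
  2 <= p -> 0 < n -> 0 < l -> 0 < t ->
  0 < #|C| -> tdup_correcting l t C ->
  (INR n - logp p (INR #|C|) >=
   INR t * logp p (INR n) - INR t * logp p (INR (t * (p - 1)))
   - INR t * INR (l + 1))%R.
Proof.
move=> hp hn hl ht hC hcor.
apply: real_part => //.
have p0 : 0 < p by lia.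
have hK : 0 < (t * (p - 1)) ^ t by rewrite expn_gt0 muln_gt0 ht subn_gt0 hp.
case: (leqP l n) => ln; last first.
  have h1 : #|C| <= p ^ n.
    by rewrite (leq_trans (max_card _)) // card_tuple card_ord.
  have h2 : n ^ t <= p ^ (t * (l + 1)).
    rewrite mulnC expnM leq_exp2r //.
    apply: (leq_trans (ltnW ln)); apply: ltnW; apply: (leq_trans (ltn_expl l hp)).
    by rewrite leq_exp2l // addn1.
  rewrite expnD -mulnA; apply: leq_mul => //.
  by rewrite -[X in X <= _]muln1 leq_mul.
apply: (final_nat hp ht ln).
have := @main_count _ (Ordinal p0) l (enum 'I_p) (enum_uniq _) (fun a => mem_enum _ a) hl n t
  [seq val c | c <- enum C] ln.
rewrite size_map -cardE size_enum_ord subn1; apply.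
- by rewrite map_inj_uniq ?enum_uniq //; apply: val_inj.
- by move=> c /mapP [tc _ ->]; rewrite size_tuple.
move=> c c' /mapP [tc htc ->] /mapP [tc' htc' ->] hne y hy hy'.
rewrite !mem_enum in htc htc'.
apply: (hcor tc tc' htc htc' _ y).
  by apply/negP => /eqP e; rewrite e eqxx in hne.
by split; exists t; split.
Qed.
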